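(* In the setting below, for any epoch $t$ and all honest nodes $k\in\mathcal{G}$: (a) $\|\mu_t^{(k)}-\nabla f(\tilde{x}_{t-1})\|\le\mathcal{V}$; (b) $\|\mu_t^{(k)}-\mu_t^{\mathrm{med}}\|\le4\mathcal{V}$ and $\|\mu_t^{\mathrm{med}}-\nabla f(\tilde{x}_{t-1})\|\le3\mathcal{V}$.
   Context: Setting: $f(x)=\mathbb{E}_{\xi\sim\mathcal{D}}f(x;\xi)$ with $\|\nabla f(x;\xi)-\nabla f(x)\|\le\mathcal{V}$ for all $x$ and all $\xi\sim\mathcal{D}$. There are $K$ worker nodes; the honest set $\mathcal{G}$ satisfies $|\mathcal{G}|\ge(1-\alpha)K$ with $\alpha\in[0,1/2)$, others Byzantine. At epoch $t$, each $k\in\mathcal{G}$ sends $\mu_t^{(k)}=\frac{1}{B_t}\sum_{i=1}^{B_t}\nabla f(\tilde{x}_{t-1};\xi_{t,i}^{(k)})$ with $\xi_{t,i}^{(k)}\sim\mathcal{D}$; each Byzantine node sends an arbitrary vector. Here $\mu_t^{\mathrm{med}}$ is defined (as in the fallback rule of the algorithm) as $\mu_t^{(k)}$ for any node $k$ such that $|\{k'\in[K]:\|\mu_t^{(k')}-\mu_t^{(k)}\|\le2\mathcal{V}\}|>K/2$. *)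

(* Defs.v *)
From HB Require Import structures.
From mathcomp Require Import all_boot all_order all_algebra.
From mathcomp Require Import all_classical all_reals all_analysis.
Set Implicit Arguments. Unset Strict Implicit. Unset Printing Implicit Defensive.
Import Order.TTheory GRing.Theory Num.Theory.
Import numFieldNormedType.Exports.
Local Open Scope ring_scope.

Definition minibatch {R : realType} {E : normedModType R} {X Xi : Type}
  (gradF : X -> Xi -> E) (B : nat) (x : X) (xi : nat -> Xi) : E :=
  (B%:R)^-1 *: \sum_(i < B) gradF x (xi i).

(* The "median" selection rule: node k is admissible as mu^med if strictly
   more than K/2 nodes k' satisfy ||mu k' - mu k|| <= 2V. *)
Definition is_med {R : realType} {E : normedModType R} {K : nat}
  (mu : 'I_K -> E) (V : R) (k : 'I_K) : Prop :=
  (K%:R / 2 < (#|[set k' : 'I_K | `|mu k' - mu k| <= 2 * V]|)%:R :> R).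

(* Main.v *)
Require Import Defs.
From HB Require Import structures.
From mathcomp Require Import all_boot all_order all_algebra.
From mathcomp Require Import all_classical all_reals all_analysis.
From mathcomp Require Import lra zify.
Import Order.TTheory GRing.Theory Num.Theory.
Import numFieldNormedType.Exports.
Local Open Scope ring_scope.

Lemma mb_bound (R : realType) (E : normedModType R) (X Xi : Type)
  (gradF : X -> Xi -> E) (grad : X -> E) (V : R)
  (hV : forall (x : X) (xi : Xi), `|gradF x xi - grad x| <= V)
  (B : nat) (x : X) (xi : nat -> Xi) : (0 < B)%N ->
  `|minibatch gradF B x xi - grad x| <= V.
Proof.
move=> hB; rewrite /minibatch.
have hBR : (B%:R : R) != 0 by rewrite pnatr_eq0 -lt0n.
have -> : grad x = (B%:R)^-1 *: \sum_(i < B) grad x.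
  by rewrite sumr_const card_ord -[grad x *+ B]scaler_nat scalerA mulVf // scale1r.
rewrite -scalerBr -sumrB normrZ.
have hpos : 0 < `|(B%:R : R)^-1| by rewrite normr_gt0 invr_eq0.
apply: (le_trans (ler_wpM2l (ltW hpos) (ler_norm_sum _ _ _))).
have hs : \sum_(i < B) `|gradF x (xi i) - grad x| <= \sum_(i < B) V.
  by apply: ler_sum => i _; exact: hV.
apply: (le_trans (ler_wpM2l (ltW hpos) hs)).
rewrite sumr_const card_ord ger0_norm ?invr_ge0 ?ler0n // -[V *+ B]mulr_natr mulrCA mulVf // mulr1.
by [].

Qed.

Theorem lemma6 (R : realType) (E : normedModType R) (X Xi : Type)
  (gradF : X -> Xi -> E) (grad : X -> E) (V : R)
  (hV : forall (x : X) (xi : Xi), `|gradF x xi - grad x| <= V)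
  (K : nat) (alpha : R) (G : {set 'I_K})
  (halpha0 : 0 <= alpha) (halpha1 : alpha < 1 / 2)
  (hG : (1 - alpha) * K%:R <= (#|G|)%:R)
  (B : nat -> nat) (xtil : nat -> X)
  (samples : nat -> 'I_K -> nat -> Xi)
  (mu : nat -> 'I_K -> E)
  (hB : forall t, (0 < B t)%N)
  (hhonest : forall t k, k \in G ->
     mu t k = minibatch gradF (B t) (xtil t.-1) (samples t k))
  (t : nat) :
  (forall k, k \in G -> `|mu t k - grad (xtil t.-1)| <= V) /\
  (forall kmed : 'I_K, is_med (mu t) V kmed ->
     (forall k, k \in G -> `|mu t k - mu t kmed| <= 4 * V) /\
     `|mu t kmed - grad (xtil t.-1)| <= 3 * V).
Proof.
have ha : forall k, k \in G -> `|mu t k - grad (xtil t.-1)| <= V.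
  by move=> k kG; rewrite hhonest //; apply: mb_bound.
split=> // kmed; rewrite /is_med => hmed.
set S := [set k' : 'I_K | `|mu t k' - mu t kmed| <= 2 * V] in hmed.
have hsum : (K < #|S| + #|G|)%N.
  rewrite -(ltr_nat R) natrD.
  have hK : 0 <= (K%:R : R) by rewrite ler0n.
  have : (K%:R : R) <= K%:R / 2 + (1 - alpha) * K%:R.
    have : 0 <= (1/2 - alpha) * K%:R by rewrite mulr_ge0 // subr_ge0 ltW.
    by rewrite mulrBl; lra.
  lra.
have : (0 < #|S :&: G|)%N.
  have hU : (#|S :|: G| <= K)%N by rewrite -[X in (_ <= X)%N]card_ord max_card.
  rewrite lt0n; apply/negP => /eqP h0.
  move: (cardsUI S G); rewrite h0 addn0 => e.
  by move: hsum; rewrite -e ltnNge hU.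
case/card_gt0P => j; rewrite !inE => /andP [jS jG].
have h3 : `|mu t kmed - grad (xtil t.-1)| <= 3 * V.
  have -> : mu t kmed - grad (xtil t.-1) =
     (mu t j - grad (xtil t.-1)) - (mu t j - mu t kmed).
    by rewrite opprB [RHS]addrC addrA subrK.
  apply: (le_trans (ler_normB _ _)).
  have := ha j jG; have := jS; lra.
split=> // k kG.
have -> : mu t k - mu t kmed =
   (mu t k - grad (xtil t.-1)) - (mu t kmed - grad (xtil t.-1)).
  by rewrite opprB addrA subrK.
apply: (le_trans (ler_normB _ _)).
have := ha k kG; lra.
Qed.
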